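(* For every ordinal $\alpha$: if $y\in E_{\alpha+1}$ and $x\in y$, then $x\in E_\alpha$.
   Context: Let $\mathrm{fun}(f,a,b)$ be the bounded formula expressing that $f$ is a function from $a$ to $b$: $f\subseteq a\times b\wedge(\forall y\in a)(\exists z\in b)((y,z)\in f)\wedge(\forall y\in a)(\forall z_1,z_2\in b)[((y,z_1)\in f\wedge(y,z_2)\in f)\to z_1=z_2]$, with Kuratowski pairs $(u,v)=\{\{u,v\},\{u\}\}$. The exponentiation hierarchy: $E_0=\emptyset$; $E_1=\{\emptyset\}$; $E_{\alpha+2}=\{X: X\text{ definable over }\langle E_{\alpha+1},\in\rangle\text{ with parameters}\}\cup\{f:\mathrm{fun}(f,a,b)\text{ for some }a,b\in E_\alpha\}$; $E_\lambda=\bigcup_{\beta<\lambda}E_\beta$ for limit $\lambda$; $E_{\lambda+1}=\{X: X\text{ definable over }\langle E_\lambda,\in\rangle\text{ with parameters}\}$ for limit $\lambda$. *)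

(* Defs.v *)
(* Sets are modelled by Aczel's type-theoretic universe of
   well-founded trees (with extensional equality [Veq] and membership [mem]);
   ordinals are represented as points of well-ordered types. *)
From Stdlib Require Import List ClassicalEpsilon.
Import ListNotations.

Inductive V : Type := sup : forall A : Type, (A -> V) -> V.

Definition idx (x : V) : Type := match x with sup A _ => A end.
Definition elt (x : V) : idx x -> V := match x with sup _ f => f end.

Fixpoint Veq (x y : V) {struct x} : Prop :=
  match x, y with
  | sup A f, sup B g =>
      (forall a : A, exists b : B, Veq (f a) (g b)) /\
      (forall b : B, exists a : A, Veq (f a) (g b))
  end.

Definition mem (x y : V) : Prop := exists b : idx y, Veq x (elt y b).

Definition subsetV (x y : V) : Prop := forall z, mem z x -> mem z y.

Definition emptyV : V := sup Empty_set (fun e => match e with end).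
Definition singV (u : V) : V := sup unit (fun _ => u).
Definition upairV (u v : V) : V := sup bool (fun b => if b then u else v).
Definition kpair (u v : V) : V := upairV (upairV u v) (singV u).
Definition prodV (a b : V) : V :=
  sup (idx a * idx b) (fun p => kpair (elt a (fst p)) (elt b (snd p))).
Definition unionV2 (x y : V) : V :=
  sup (idx x + idx y) (fun s => match s with inl i => elt x i | inr j => elt y j end).
Definition subV (X : V) (P : idx X -> Prop) : V :=
  sup {c : idx X | P c} (fun s => elt X (proj1_sig s)).

Definition isFun (f a b : V) : Prop :=
  subsetV f (prodV a b) /\
  (forall y, mem y a -> exists z, mem z b /\ mem (kpair y z) f) /\
  (forall y, mem y a -> forall z1 z2, mem z1 b -> mem z2 b ->
     mem (kpair y z1) f -> mem (kpair y z2) f -> Veq z1 z2).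

(* { f : fun(f,a,b) for some a, b ∈ S }  (realised inside P(a × b)) *)
Definition FunSet (S : V) : V :=
  sup {i : idx S & {j : idx S &
        {P : idx (prodV (elt S i) (elt S j)) -> Prop |
           isFun (subV (prodV (elt S i) (elt S j)) P) (elt S i) (elt S j)}}}
      (fun s => subV (prodV (elt S (projT1 s)) (elt S (projT1 (projT2 s))))
                     (proj1_sig (projT2 (projT2 s)))).

(* formulas of the language {∈, =}, de Bruijn variables *)
Inductive form : Set :=
| FMem : nat -> nat -> form
| FEq  : nat -> nat -> form
| FFalse : form
| FNot : form -> form
| FAnd : form -> form -> form
| FOr  : form -> form -> form
| FImp : form -> form -> form
| FEx  : form -> form
| FAll : form -> form.

(* satisfaction in <M, ∈>; variables are assigned elements of M (by index);
   unassigned variables make atomic formulas false *)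
Fixpoint sat (M : V) (e : list (idx M)) (p : form) {struct p} : Prop :=
  match p with
  | FMem i j => match nth_error e i, nth_error e j with
                | Some a, Some b => mem (elt M a) (elt M b)
                | _, _ => False end
  | FEq i j => match nth_error e i, nth_error e j with
               | Some a, Some b => Veq (elt M a) (elt M b)
               | _, _ => False end
  | FFalse => False
  | FNot q => ~ sat M e q
  | FAnd q r => sat M e q /\ sat M e r
  | FOr q r => sat M e q \/ sat M e r
  | FImp q r => sat M e q -> sat M e r
  | FEx q => exists a : idx M, sat M (a :: e) q
  | FAll q => forall a : idx M, sat M (a :: e) q
  end.

Definition defsub (M : V) (phi : form) (ps : list (idx M)) : V :=
  subV M (fun a => sat M (a :: ps) phi).

Definition Def (M : V) : V :=
  sup (form * list (idx M)) (fun q => defsub M (fst q) (snd q)).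

Record WO : Type := {
  wcar :> Type;
  wlt : wcar -> wcar -> Prop;
  wlt_wf : well_founded wlt;
  wlt_trans : forall x y z, wlt x y -> wlt y z -> wlt x z;
  wlt_total : forall x y, wlt x y \/ x = y \/ wlt y x
}.

Definition IsSucc (W : WO) (a b : W) : Prop :=
  wlt W a b /\ forall c, wlt W a c -> ~ wlt W c b.

Section Hier.
Variable W : WO.

Definition Estep (g : W) (rec : forall b : W, wlt W b g -> V) : V :=
  match excluded_middle_informative (exists b, IsSucc W b g) with
  | left H =>
      let (b, Hb) := constructive_indefinite_description _ H in
      let Eb := rec b (proj1 Hb) in
      match excluded_middle_informative (exists d, IsSucc W d b) with
      | left H' =>
          let (d, Hd) := constructive_indefinite_description _ H' in
          (* g = d + 2 :  Def(E_{d+1}) ∪ {f | fun(f,a,b), a,b ∈ E_d} *)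
          unionV2 (Def Eb)
                  (FunSet (rec d (wlt_trans W _ _ _ (proj1 Hd) (proj1 Hb))))
      | right _ =>
          match excluded_middle_informative (exists d, wlt W d b) with
          | left _ => Def Eb            (* g = λ + 1, λ limit *)
          | right _ => singV emptyV     (* g = 1 *)
          end
      end
  | right _ =>
      (* g = 0 or g limit : union of the earlier levels *)
      sup {b : W & {h : wlt W b g & idx (rec b h)}}
          (fun s => elt (rec (projT1 s) (projT1 (projT2 s))) (projT2 (projT2 s)))
  end.

Definition E : W -> V := Fix (wlt_wf W) (fun _ => V) Estep.
End Hier.

(* Main.v *)
Require Import Defs.
From Stdlib Require Import List ClassicalEpsilon Classical FunctionalExtensionality.
Import ListNotations.

Lemma Veq_refl : forall x, Veq x x.
Proof. induction x as [A f IH]; simpl; split; intro a; exists a; apply IH. Qed.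

Lemma Veq_sym : forall x y, Veq x y -> Veq y x.
Proof.
  induction x as [A f IH]; destruct y as [B g]; simpl; intros [H1 H2]; split.
  - intro b. destruct (H2 b) as [a Ha]. exists a. apply IH, Ha.
  - intro a. destruct (H1 a) as [b Hb]. exists b. apply IH, Hb.
Qed.

Lemma Veq_trans : forall x y z, Veq x y -> Veq y z -> Veq x z.
Proof.
  induction x as [A f IH]; destruct y as [B g]; destruct z as [C h]; simpl;
  intros [H1 H2] [K1 K2]; split.
  - intro a. destruct (H1 a) as [b Hb]. destruct (K1 b) as [c Hc].
    exists c. eapply IH; eauto.
  - intro c. destruct (K2 c) as [b Hb]. destruct (H2 b) as [a Ha].
    exists a. eapply IH; eauto.
Qed.

Lemma Veq_elt : forall x y, Veq x y -> forall a, exists b, Veq (elt x a) (elt y b).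
Proof. destruct x, y; simpl; intros [H1 _]; exact H1. Qed.

Lemma mem_Veq_l : forall x x' y, Veq x x' -> mem x y -> mem x' y.
Proof.
  intros x x' y H [b Hb]. exists b. eapply Veq_trans; [apply Veq_sym, H|exact Hb].
Qed.

Lemma mem_Veq_r : forall x y y', Veq y y' -> mem x y -> mem x y'.
Proof.
  intros x y y' H [b Hb]. destruct (Veq_elt _ _ H b) as [b' Hb'].
  exists b'. eapply Veq_trans; eauto.
Qed.

Lemma ext : forall x y, (forall z, mem z x -> mem z y) -> (forall z, mem z y -> mem z x) -> Veq x y.
Proof.
  destruct x as [A f], y as [B g]; simpl; intros H1 H2; split.
  - intro a. destruct (H1 (f a)) as [b Hb]. exists a; apply Veq_refl.
    exists b; exact Hb.
  - intro b. destruct (H2 (g b)) as [a Ha]. exists b; apply Veq_refl.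
    exists a; apply Veq_sym; exact Ha.
Qed.

Lemma mem_elt : forall y i, mem (elt y i) y.
Proof. intros y i. exists i. apply Veq_refl. Qed.

Lemma Pair_Def : forall M p q, mem p M -> mem q M -> mem (upairV p q) (Def M).
Proof.
  intros M p q [ip Hp] [iq Hq].
  exists (FOr (FEq 0 1) (FEq 0 2), [ip; iq]). change (Veq (upairV p q) (defsub M (FOr (FEq 0 1) (FEq 0 2)) [ip; iq])).
  apply ext.
  - intros z [[|] Hz]; simpl in Hz.
    + unshelve eexists. exists ip. simpl. left. apply Veq_refl.
      simpl. eapply Veq_trans; eauto.
    + unshelve eexists. exists iq. simpl. right. apply Veq_refl.
      simpl. eapply Veq_trans; eauto.
  - intros z [[a Ha] Hz]; simpl in *.
    destruct Ha as [Ha|Ha].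
    + exists true. simpl. eapply Veq_trans; [exact Hz|].
      eapply Veq_trans; [exact Ha| apply Veq_sym, Hp].
    + exists false. simpl. eapply Veq_trans; [exact Hz|].
      eapply Veq_trans; [exact Ha| apply Veq_sym, Hq].
Qed.

Lemma Sub_Def : forall M x, subsetV x M -> mem x M -> mem x (Def M).
Proof.
  intros M x HS [ix Hx].
  exists (FMem 0 1, [ix]). change (Veq x (defsub M (FMem 0 1) [ix])).
  apply ext.
  - intros z Hz. destruct (HS z Hz) as [a Ha].
    unshelve eexists. exists a. simpl.
    eapply mem_Veq_r; [exact Hx|]. eapply mem_Veq_l; [exact Ha|exact Hz].
    simpl. exact Ha.
  - intros z [[a Ha] Hz]; simpl in *.
    eapply mem_Veq_r; [apply Veq_sym, Hx|]. eapply mem_Veq_l; [apply Veq_sym, Hz|exact Ha].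
Qed.

Lemma Def_elem : forall M y x, mem y (Def M) -> mem x y -> mem x M.
Proof.
  intros M y x [[phi ps] Hy] Hx. simpl in Hy.
  destruct (mem_Veq_r _ _ _ Hy Hx) as [[a Ha] H]. simpl in H.
  exists a. exact H.
Qed.

Section S.
Variable W : WO.
Notation lt := (wlt W).

Lemma E_unfold : forall g, E W g = Estep W g (fun b _ => E W b).
Proof.
  intro g. unfold E. apply (Fix_eq (wlt_wf W) (fun _ => V) (Estep W)).
  intros x f h Hfh.
  assert (f = h) as ->.
  { apply functional_extensionality_dep; intro y.
    apply functional_extensionality_dep; intro p. apply Hfh. }
  reflexivity.
Qed.

Lemma succ_unique : forall a b s, IsSucc W a s -> IsSucc W b s -> a = b.
Proof.
  intros a b s [Ha1 Ha2] [Hb1 Hb2].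
  destruct (wlt_total W a b) as [H|[H|H]]; auto.
  - exfalso. exact (Ha2 b H Hb1).
  - exfalso. exact (Hb2 a H Ha1).
Qed.

Lemma succ_exists : forall m d, lt m d -> exists s, IsSucc W m s /\ (s = d \/ lt s d).
Proof.
  intros m d Hmd.
  assert (Hmin : forall c, Acc lt c -> lt m c -> exists s, IsSucc W m s /\ (s = c \/ lt s c)).
  { intros c Hc. induction Hc as [c _ IH]. intro Hmc.
    destruct (classic (exists c', lt m c' /\ lt c' c)) as [[c' [H1 H2]]|Hn].
    - destruct (IH c' H2 H1) as [s [Hs1 Hs2]]. exists s. split; auto.
      right. destruct Hs2 as [->|Hs2]; auto. eapply wlt_trans; eauto.
    - exists c. split; auto. split; auto. intros c' H1 H2. apply Hn; eauto. }
  apply Hmin; auto. apply wlt_wf.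
Qed.

Lemma E_empty : forall m, ~ (exists d, lt d m) -> forall w, ~ mem w (E W m).
Proof.
  intros m Hm w Hw. rewrite E_unfold in Hw. unfold Estep in Hw.
  destruct (excluded_middle_informative _) as [H|H].
  - apply Hm. clear Hw. destruct H as [b [Hb _]]. eauto.
  - destruct Hw as [[b [h _]] _]. apply Hm; eauto.
Qed.

Lemma DE : forall m s z, IsSucc W m s -> mem z (Def (E W m)) -> mem z (E W s).
Proof.
  intros m s z Hms Hz. rewrite E_unfold. unfold Estep.
  destruct (excluded_middle_informative _) as [H|H]; [|exfalso; apply H; eauto].
  destruct (constructive_indefinite_description _ H) as [b Hb].
  assert (b = m) by (eapply succ_unique; eauto). subst b. cbv beta.
  destruct (excluded_middle_informative _) as [H'|H'].
  - destruct (constructive_indefinite_description _ H') as [d Hd].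
    destruct Hz as [i Hi]. exists (inl i). exact Hi.
  - destruct (excluded_middle_informative _) as [H''|H'']; [exact Hz|].
    exists tt. simpl. apply ext.
    + intros w Hw. exfalso. eapply E_empty; [exact H''|].
      eapply Def_elem; eauto.
    + intros w [[] _].
Qed.

Lemma E_cases : forall g y, mem y (E W g) ->
  (exists b, lt b g /\ mem y (E W b)) \/
  (exists b, IsSucc W b g /\ mem y (Def (E W b))) \/
  (exists b d, IsSucc W b g /\ IsSucc W d b /\ mem y (FunSet (E W d))) \/
  Veq y emptyV.
Proof.
  intros g y Hy. rewrite E_unfold in Hy. unfold Estep in Hy.
  destruct (excluded_middle_informative _) as [H|H].
  - destruct (constructive_indefinite_description _ H) as [b Hb]. cbv beta in Hy.
    destruct (excluded_middle_informative _) as [H'|H'].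
    + destruct (constructive_indefinite_description _ H') as [d Hd].
      destruct Hy as [[i|j] Hi]; simpl in Hi.
      * right; left. exists b. split; auto. exists i; exact Hi.
      * right; right; left. exists b, d. repeat split; auto; try apply Hb; try apply Hd.
        exists j; exact Hi.
    + destruct (excluded_middle_informative _) as [H''|H''].
      * right; left. exists b. split; auto.
      * right; right; right. destruct Hy as [[] Hi]. exact Hi.
  - left. destruct Hy as [[b [h i]] Hi]. simpl in Hi. exists b. split; auto.
    exists i. exact Hi.
Qed.

Lemma E_lim : forall g h y, ~ (exists b, IsSucc W b g) -> lt h g -> mem y (E W h) -> mem y (E W g).
Proof.
  intros g h y Hn Hh [i Hi]. rewrite E_unfold. unfold Estep.
  destruct (excluded_middle_informative _) as [H|H]; [contradiction|].
  exists (existT _ h (existT _ Hh i)). simpl. exact Hi.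
Qed.

Definition SP (g : W) := forall x y, mem y (E W g) -> mem x y -> exists h, lt h g /\ mem x (E W h).
Definition MP (g : W) := forall h y, lt h g -> mem y (E W h) -> mem y (E W g).

Lemma main_ind : forall g, SP g /\ MP g.
Proof.
  intro g. induction g as [g IH] using (well_founded_ind (wlt_wf W)).
  assert (HM : MP g).
  { intros h y Hh Hy.
    destruct (classic (exists b, IsSucc W b g)) as [[b Hb]|Hn].
    - assert (Hyb : mem y (E W b)).
      { destruct (wlt_total W h b) as [H|[H|H]].
        - eapply (proj2 (IH b (proj1 Hb))); eauto.
        - subst; auto.
        - exfalso. exact (proj2 Hb h H Hh). }
      apply (DE b). exact Hb. apply Sub_Def; auto.
      intros z Hz. destruct (proj1 (IH b (proj1 Hb)) z y Hyb Hz) as [h' [Hh' Hz']].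
      eapply (proj2 (IH b (proj1 Hb))); eauto.
    - eapply E_lim; eauto. }
  split; [|exact HM].
  intros x y Hy Hx.
  destruct (E_cases g y Hy) as [[b [Hb Hyb]]|[[b [Hb Hyb]]|[[b [d [Hb [Hd Hyd]]]]|Hy0]]].
  - destruct (proj1 (IH b Hb) x y Hyb Hx) as [h [Hh Hxh]].
    exists h. split; auto. eapply wlt_trans; eauto.
  - exists b. split. apply Hb. eapply Def_elem; eauto.
  - exists b. split. apply Hb.
    assert (Hdg : lt d g) by (eapply wlt_trans; [apply Hd|apply Hb]).
    destruct Hyd as [[i [j [P HP]]] Hyv]. simpl in Hyv.
    destruct (mem_Veq_r _ _ _ Hyv Hx) as [[[p1 p2] Hp] Hxk]. simpl in Hxk.
    set (A := elt (E W d) i) in *. set (B := elt (E W d) j) in *.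
    set (u := elt A p1) in *. set (v := elt B p2) in *.
    destruct (proj1 (IH d Hdg) u A (mem_elt _ _) (mem_elt _ _)) as [h1 [Hh1 Hu]].
    destruct (proj1 (IH d Hdg) v B (mem_elt _ _) (mem_elt _ _)) as [h2 [Hh2 Hv]].
    assert (Hm : exists m, lt m d /\ mem u (E W m) /\ mem v (E W m)).
    { destruct (wlt_total W h1 h2) as [H|[H|H]].
      - exists h2. repeat split; auto.
        eapply (proj2 (IH h2 (wlt_trans W _ _ _ Hh2 Hdg))); eauto.
      - subst. eauto.
      - exists h1. repeat split; auto.
        eapply (proj2 (IH h1 (wlt_trans W _ _ _ Hh1 Hdg))); eauto. }
    destruct Hm as [m [Hmd [Hum Hvm]]].
    destruct (succ_exists m d Hmd) as [s [Hs Hsd]].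
    assert (Lift : forall z, mem z (E W s) -> mem z (E W d)).
    { intros z Hz. destruct Hsd as [->|Hsd]; auto.
      eapply (proj2 (IH d Hdg)); eauto. }
    assert (H1 : mem (upairV u v) (E W d)).
    { apply Lift. apply (DE m); auto. apply Pair_Def; auto. }
    assert (H2 : mem (singV u) (E W d)).
    { apply Lift. apply (DE m); auto.
      eapply mem_Veq_l; [|apply Pair_Def; [exact Hum|exact Hum]].
      apply ext.
      - intros z [[|] Hz]; exists tt; exact Hz.
      - intros z [[] Hz]; exists true; exact Hz. }
    eapply mem_Veq_l; [apply Veq_sym, Hxk|].
    apply (DE d); auto. apply Pair_Def; auto.
  - exfalso. destruct (mem_Veq_r _ _ _ Hy0 Hx) as [[] _].
Qed.

End S.

Theorem lemma4p2 (W : WO) (alpha beta : W) (Hs : IsSucc W alpha beta)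
  (x y : V) :
  mem y (E W beta) -> mem x y -> mem x (E W alpha).
Proof.
  intros Hy Hx.
  destruct (proj1 (main_ind W beta) x y Hy Hx) as [h [Hh Hxh]].
  destruct (wlt_total W h alpha) as [H|[H|H]].
  - eapply (proj2 (main_ind W alpha)); eauto.
  - subst; auto.
  - exfalso. exact (proj2 Hs h H Hh).
Qed.
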